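(* Every Ferrers-convex matrix is convex and has unimodal row and column sum vectors.
   Context: A $(0,1)$-matrix is convex if the 1's occur consecutively in every row and in every column. A Ferrers array is a left-justified array of positions where the numbers of positions in the rows form a nonincreasing vector; a Ferrers matrix is a $(0,1)$-matrix the positions of whose 1's form a Ferrers array. Let $m_1,m_2,n_1,n_2$ be positive integers. A Ferrers-convex matrix is a matrix $A=\begin{bmatrix} A_{11} & A_{12}\\ A_{21} & A_{22}\end{bmatrix}$, where $A_{22}$, $A_{12}$, $A_{21}$, $A_{11}$ are matrices obtained by rotating some (possibly different) Ferrers matrices by $0$, $90$, $180$ and $270$ degrees counterclockwise, respectively, with $A_{11}$ of size $m_1\times n_1$ and $A_{22}$ of size $m_2\times n_2$ (which determines the sizes of $A_{12}$ and $A_{21}$). A vector is unimodal if its components are first nondecreasing and then nonincreasing. *)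

(* Defs.v *)
From mathcomp Require Import all_boot all_order all_algebra.
Set Implicit Arguments. Unset Strict Implicit. Unset Printing Implicit Defensive.

Definition is01 (m n : nat) (A : 'M[nat]_(m, n)) : Prop :=
  forall i j, A i j = 0 \/ A i j = 1.

Definition convex_mx (m n : nat) (A : 'M[nat]_(m, n)) : Prop :=
  is01 A /\
  (forall (i : 'I_m) (j1 j2 j : 'I_n),
      j1 <= j -> j <= j2 -> A i j1 = 1 -> A i j2 = 1 -> A i j = 1) /\
  (forall (j : 'I_n) (i1 i2 i : 'I_m),
      i1 <= i -> i <= i2 -> A i1 j = 1 -> A i2 j = 1 -> A i j = 1).

Definition ferrers_mx (m n : nat) (A : 'M[nat]_(m, n)) : Prop :=
  exists r : 'I_m -> nat,
    (forall i, r i <= n) /\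
    (forall i1 i2 : 'I_m, i1 <= i2 -> r i2 <= r i1) /\
    (forall i j, A i j = nat_of_bool (j < r i)).

(* Counterclockwise rotations of an m x n matrix by 90, 180, 270 degrees. *)
Definition rot90 (m n : nat) (B : 'M[nat]_(m, n)) : 'M[nat]_(n, m) :=
  \matrix_(i < n, j < m) B j (rev_ord i).
Definition rot180 (m n : nat) (B : 'M[nat]_(m, n)) : 'M[nat]_(m, n) :=
  \matrix_(i < m, j < n) B (rev_ord i) (rev_ord j).
Definition rot270 (m n : nat) (B : 'M[nat]_(m, n)) : 'M[nat]_(n, m) :=
  \matrix_(i < n, j < m) B (rev_ord j) i.

Definition ferrers_convex (m1 m2 n1 n2 : nat)
    (A : 'M[nat]_(m1 + m2, n1 + n2)) : Prop :=
  exists (F11 : 'M[nat]_(m1, n1)) (F12 : 'M[nat]_(n2, m1))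
         (F21 : 'M[nat]_(n1, m2)) (F22 : 'M[nat]_(m2, n2)),
    [/\ ferrers_mx F11, ferrers_mx F12, ferrers_mx F21, ferrers_mx F22
      & A = block_mx (rot180 F11) (rot90 F12) (rot270 F21) F22].

Definition unimodal (k : nat) (v : 'I_k -> nat) : Prop :=
  exists p : nat,
    (forall i j : 'I_k, i <= j -> j <= p -> v i <= v j) /\
    (forall i j : 'I_k, p <= i -> i <= j -> v j <= v i).

Definition row_sums (m n : nat) (A : 'M[nat]_(m, n)) : 'I_m -> nat :=
  fun i => \sum_(j < n) A i j.
Definition col_sums (m n : nat) (A : 'M[nat]_(m, n)) : 'I_n -> nat :=
  fun j => \sum_(i < m) A i j.

(* Main.v *)
Require Import Defs.
From mathcomp Require Import all_boot all_order all_algebra.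
From mathcomp Require Import zify.

Lemma nbM (x x' a b : nat) : x' <= x -> a <= b ->
  nat_of_bool (x < a) <= nat_of_bool (x' < b).
Proof.
move=> h1 h2; case: (ltnP x a) => //= h.
by rewrite (leq_ltn_trans h1 (leq_trans h h2)).
Qed.

Lemma unimodal_split a b (v : 'I_(a+b) -> nat) : 0 < a -> 0 < b ->
  (forall i j : 'I_(a+b), i <= j -> j < a -> v i <= v j) ->
  (forall i j : 'I_(a+b), a <= i -> i <= j -> v j <= v i) -> unimodal v.
Proof.
move=> ha hb h1 h2.
have ka : a.-1 < a + b by lia.
have kb : a < a + b by lia.
case: (leqP (v (Ordinal kb)) (v (Ordinal ka))) => hv.
- exists a.-1; split.
  + move=> i j ij jp; apply: h1 => //; lia.
  + move=> i j pi ij. case: (leqP a i) => ai; first exact: h2.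
    have -> : i = Ordinal ka by apply: val_inj => /=; lia.
    case: (leqP a j) => aj.
    * apply: leq_trans hv; exact: h2.
    * have -> : j = Ordinal ka by apply: val_inj => /=; lia.
      by [].
- exists a; split.
  + move=> i j ij ja. case: (ltnP j a) => jl; first exact: h1.
    have ej : j = Ordinal kb by apply: val_inj => /=; lia.
    case: (ltnP i a) => il.
    * rewrite ej; apply: leq_trans (ltnW hv); apply: h1 => //=; lia.
    * have -> : i = j by apply: val_inj => /=; lia.
      by [].
  + move=> i j ai ij; exact: h2.
Qed.

Ltac fin x y z e11 e12 e21 e22 h11 h12 h21 h22 :=
  rewrite ?block_mxEul ?block_mxEur ?block_mxEdl ?block_mxEdr /= => le lt;
  rewrite ?mxE ?e11 ?e12 ?e21 ?e22;
  have := ltn_ord x; have := ltn_ord y; have := ltn_ord z; move=> ? ? ?;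
  first [ (exfalso; lia)
        | apply: nbM; [ rewrite /=; lia
                      | first [ (rewrite /=; lia)
                              | (apply: h11; rewrite /=; lia)
                              | (apply: h12; rewrite /=; lia)
                              | (apply: h21; rewrite /=; lia)
                              | (apply: h22; rewrite /=; lia) ] ] ].

Theorem mainTheorem7 (m1 m2 n1 n2 : nat)
    (hm1 : 0 < m1) (hm2 : 0 < m2) (hn1 : 0 < n1) (hn2 : 0 < n2)
    (A : 'M[nat]_(m1 + m2, n1 + n2)) :
  ferrers_convex A ->
  convex_mx A /\ unimodal (row_sums A) /\ unimodal (col_sums A).
Proof.
case=> F11 [F12 [F21 [F22 [[r11 [_ [h11 e11]]] [r12 [_ [h12 e12]]]
   [r21 [_ [h21 e21]]] [r22 [_ [h22 e22]]] hA]]]].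
have R1 : forall (i1 i2 : 'I_(m1+m2)) j, i1 <= i2 -> i2 < m1 -> A i1 j <= A i2 j.
  move=> i1 i2 j; rewrite hA.
  case: (split_ordP i1) => a1 ->; case: (split_ordP i2) => a2 ->;
  case: (split_ordP j) => b ->; fin a1 a2 b e11 e12 e21 e22 h11 h12 h21 h22.
have R2 : forall (i1 i2 : 'I_(m1+m2)) j, m1 <= i1 -> i1 <= i2 -> A i2 j <= A i1 j.
  move=> i1 i2 j; rewrite hA.
  case: (split_ordP i1) => a1 ->; case: (split_ordP i2) => a2 ->;
  case: (split_ordP j) => b ->; fin a1 a2 b e11 e12 e21 e22 h11 h12 h21 h22.
have C1 : forall i (j1 j2 : 'I_(n1+n2)), j1 <= j2 -> j2 < n1 -> A i j1 <= A i j2.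
  move=> i j1 j2; rewrite hA.
  case: (split_ordP i) => a ->; case: (split_ordP j1) => b1 ->;
  case: (split_ordP j2) => b2 ->; fin a b1 b2 e11 e12 e21 e22 h11 h12 h21 h22.
have C2 : forall i (j1 j2 : 'I_(n1+n2)), n1 <= j1 -> j1 <= j2 -> A i j2 <= A i j1.
  move=> i j1 j2; rewrite hA.
  case: (split_ordP i) => a ->; case: (split_ordP j1) => b1 ->;
  case: (split_ordP j2) => b2 ->; fin a b1 b2 e11 e12 e21 e22 h11 h12 h21 h22.
have is01A : is01 A.
  move=> i j; rewrite hA.
  case: (split_ordP i) => a ->; case: (split_ordP j) => b ->;
  rewrite ?block_mxEul ?block_mxEur ?block_mxEdl ?block_mxEdr ?mxE ?e11 ?e12 ?e21 ?e22;
  case: (_ < _); auto.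
split; [split; [exact: is01A | split] | split].
- move=> i j1 j2 j h1 h2 a1 a2; case: (ltnP j n1) => hj.
  + have H := C1 i j1 j h1 hj; rewrite a1 in H; case: (is01A i j) H => ->; lia.
  + have H := C2 i j j2 hj h2; rewrite a2 in H; case: (is01A i j) H => ->; lia.
- move=> j i1 i2 i h1 h2 a1 a2; case: (ltnP i m1) => hi.
  + have H := R1 i1 i j h1 hi; rewrite a1 in H; case: (is01A i j) H => ->; lia.
  + have H := R2 i i2 j hi h2; rewrite a2 in H; case: (is01A i j) H => ->; lia.
- apply: unimodal_split => // i1 i2 h1 h2; rewrite /row_sums; apply: leq_sum => j _.
  + exact: R1.
  + exact: R2.
- apply: unimodal_split => // j1 j2 h1 h2; rewrite /col_sums; apply: leq_sum => i _.
  + exact: C1.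
  + exact: C2.
Qed.
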